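(* Let $G=(V,E)$ be a graph, $v\in V$, $S_v$ the partial star product of $v$, and $f\in F_v$. Then $f$ is the opposite edge (in a square of $S_v$) of exactly one primal edge $e\in E_v$, and $(e,f)\in\mathfrak d_{|S_v}$.
   Context: All graphs are finite, simple and undirected. For a graph $G=(V,E)$ and $v\in V$, $E_v$ denotes the set of edges incident to $v$. For two distinct adjacent edges $e=(v,u)$, $f=(v,w)$, a square spanned by $e$ and $f$ is a $4$-cycle $v,u,x,w,v$ with $x\notin\{v,u,w\}$; $x$ is its top vertex. The square is chordless if neither $(u,w)$ nor $(v,x)$ is an edge of $G$. In a square $v,u,x,w$, $(x,w)$ is the opposite edge of $(v,u)$ and $(x,u)$ is the opposite edge of $(v,w)$ (and vice versa). The relation $\delta(G)\subseteq E\times E$: $(e,f)\in\delta(G)$ iff (i) $e,f$ are distinct adjacent edges and it is not the case that $e$ and $f$ span exactly one square and that square is chordless; or (ii) $e,f$ are opposite edges of a chordless square; or (iii) $e=f$. Define $\mathfrak d_v=((E_v\times E)\cup(E\times E_v))\cap\delta(G)$ and $\mathfrak d_v^*$ the finest equivalence relation on $E$ containing $\mathfrak d_v$. Let $F_v\subseteq E\setminus E_v$ be the set of edges that are the edges not incident to $v$ of some chordless square spanned by two edges $e,e'\in E_v$ with $(e,e')\notin\mathfrak d_v^*$. The partial star product $S_v$ is the subgraph of $G$ with edge set $E_v\cup F_v$ and vertex set the endpoints of these edges. Define $\mathfrak d_{|S_v}=\{(e,f)\in\mathfrak d_v^*: e,f\in E(S_v)\}$, an equivalence relation on $E(S_v)$.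 *)

(* Defs.v *)
(* A finite simple graph is a symmetric irreflexive relation
   g : rel T on a finite vertex type T; an edge is the 2-element set {u,w}
   with g u w. *)
From mathcomp Require Import all_boot.
Set Implicit Arguments. Unset Strict Implicit. Unset Printing Implicit Defensive.

Section Defs.
Variables (T : finType) (g : rel T).

Definition is_edge (A : {set T}) : bool :=
  [exists u, exists w, g u w && (A == [set u; w])].

Definition inc (v : T) (A : {set T}) : bool := is_edge A && (v \in A).

(* v,u,x,w,v is a square spanned by (v,u),(v,w) with top vertex x *)
Definition sq (v u w x : T) : bool :=
  [&& g v u, g v w, g u x, g x w, u != w, x != v, x != u & x != w].

Definition chordless (v u w x : T) : bool := ~~ g u w && ~~ g v x.

(* A and B span exactly one square, and that square is chordless
   (squares spanned by (v,u),(v,w) are identified by their top vertex) *)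
Definition one_chordless_sq (A B : {set T}) : bool :=
  [exists v, exists u, exists w,
     [&& A == [set v; u], B == [set v; w], g v u, g v w, u != w,
         #|[set x | sq v u w x]| == 1 &
         [forall x, sq v u w x ==> chordless v u w x]]].

Definition opp_chordless (A B : {set T}) : bool :=
  [exists v, exists u, exists w, exists x,
     [&& sq v u w x, chordless v u w x &
       [|| (A == [set v; u]) && (B == [set x; w]),
           (A == [set x; w]) && (B == [set v; u]),
           (A == [set v; w]) && (B == [set x; u]) |
           (A == [set x; u]) && (B == [set v; w])]]].

Definition delta (A B : {set T}) : bool :=
  [&& is_edge A, is_edge B &
   [|| [&& A != B, A :&: B != set0 & ~~ one_chordless_sq A B],
       opp_chordless A B | A == B]].

Definition dv (v : T) (A B : {set T}) : bool :=
  ((inc v A && is_edge B) || (is_edge A && inc v B)) && delta A B.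

(* d_v^* : finest equivalence relation on E containing d_v *)
Definition dvstar (v : T) (A B : {set T}) : bool :=
  [&& is_edge A, is_edge B &
      connect [rel X Y | dv v X Y || dv v Y X] A B].

Definition in_Fv (v : T) (f : {set T}) : bool :=
  [&& is_edge f, v \notin f &
   [exists u, exists w, exists x,
     [&& sq v u w x, chordless v u w x,
         ~~ dvstar v [set v; u] [set v; w] &
         (f == [set u; x]) || (f == [set w; x])]]].

Definition in_Sv (v : T) (A : {set T}) : bool := inc v A || in_Fv v A.

Definition dSv (v : T) (A B : {set T}) : bool :=
  [&& in_Sv v A, in_Sv v B & dvstar v A B].

Definition opp_in_Sv (v : T) (e f : {set T}) : bool :=
  [exists a, exists b, exists c, exists d,
     [&& sq a b c d,
         in_Sv v [set a; b], in_Sv v [set b; d],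
         in_Sv v [set d; c], in_Sv v [set c; a] &
       [|| (e == [set a; b]) && (f == [set d; c]),
           (e == [set d; c]) && (f == [set a; b]),
           (e == [set a; c]) && (f == [set d; b]) |
           (e == [set d; b]) && (f == [set a; c])]]].

End Defs.

(* Main.v *)
Require Import Defs.
From mathcomp Require Import all_boot.
Set Implicit Arguments. Unset Strict Implicit.

Lemma set2_inv (T : finType) (a b c d : T): [set a; b] = [set c; d] -> (a = c /\ b = d) \/ (a = d /\ b = c).
Proof. move=> E. have Ha : a \in [set c; d] by rewrite -E set21. have Hb : b \in [set c;d] by rewrite -E set22. have Hc: c \in [set a;b] by rewrite E set21. have Hd: d \in [set a; b] by rewrite E set22.
rewrite !inE in Ha Hb Hc Hd.
case/orP: Ha => /eqP ?; case/orP: Hb => /eqP ?; case/orP: Hc => /eqP ?; case/orP: Hd => /eqP ?; subst; auto.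
Qed.

Section S.
Variables (T : finType) (g : rel T).
Hypotheses (g_sym : symmetric g) (g_irr : irreflexive g).

Lemma edgeP a b : g a b -> is_edge g [set a; b].
Proof. by move=> h; apply/existsP; exists a; apply/existsP; exists b; rewrite h eqxx. Qed.

Lemma gne a b : g a b -> a != b.
Proof. by apply: contraTneq => ->; rewrite g_irr. Qed.

Lemma sq_sym v u w x : sq g v u w x -> sq g v w u x.
Proof.
rewrite /sq => /and4P[h1 h2 h3 /and5P[h4 h5 h6 h7 h8]].
by rewrite h1 h2 (g_sym w x) h4 (g_sym x u) h3 (eq_sym w u) h5 h6 h7 h8.
Qed.

Lemma cl_sym v u w x : chordless g v u w x -> chordless g v w u x.
Proof. by rewrite /chordless g_sym. Qed.

Definition R v := [rel X Y | dv g v X Y || dv g v Y X].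

Lemma R_sym v : symmetric (R v).
Proof. by move=> X Y; rewrite /= orbC. Qed.

Lemma dvstar_sym v A B : dvstar g v A B -> dvstar g v B A.
Proof.
rewrite /dvstar => /and3P[h1 h2 h3]; rewrite h1 h2 /=.
by rewrite (sym_connect_sym (R_sym v)) in h3.
Qed.

Lemma dvstar_trans v A B C : dvstar g v A B -> dvstar g v B C -> dvstar g v A C.
Proof.
rewrite /dvstar => /and3P[h1 h2 h3] /and3P[_ h4 h5]; rewrite h1 h4 /=.
exact: connect_trans h3 h5.
Qed.

Lemma dv_star v A B : dv g v A B -> dvstar g v A B.
Proof.
move=> h; have := h; rewrite /dv => /andP[_ /and3P[h1 h2 _]].
by rewrite /dvstar h1 h2 /=; apply: connect1; rewrite /= h.
Qed.

Lemma ocs_card a b c : g a b -> g a c -> b != c ->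
  one_chordless_sq g [set a; b] [set a; c] -> #|[set z | sq g a b c z]| == 1.
Proof.
move=> hab hac nbc /existsP[v' /existsP[u' /existsP[w' /and5P[/eqP E1 /eqP E2 _ _ /and3P[_ hc _]]]]].
have nab := gne hab; have nac := gne hac.
case: (set2_inv E1) => [[? ?]|[? ?]]; case: (set2_inv E2) => [[? ?]|[? ?]]; subst => //. all: try by move: nab; rewrite eqxx. all: try by move: nbc; rewrite eqxx. all: by move: nac; rewrite eqxx.
Qed.

Lemma sUC (a b : T) : [set a; b] = [set b; a].
Proof. exact: setUC. Qed.

Lemma d2 v u w x : sq g v u w x -> chordless g v u w x ->
  dv g v [set u; x] [set v; w].
Proof.
move=> hsq hcl; have := hsq; rewrite /sq => /and4P[h1 h2 h3 /and5P[h4 h5 h6 h7 h8]].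
have Eux := edgeP h3; have Evw := edgeP h2.
rewrite /dv /inc Eux Evw set21 /= /delta Eux Evw /= orbT /=.
apply/orP; right; apply/orP; left.
apply/existsP; exists v; apply/existsP; exists u; apply/existsP; exists w; apply/existsP; exists x.
by rewrite hsq hcl (sUC u x) !eqxx !orbT.
Qed.

Lemma uniq_core v u w x p q r s : sq g v u w x -> chordless g v u w x ->
  ~~ dvstar g v [set v; u] [set v; w] -> g p q -> g p s -> g q r -> q != s -> p != r ->
  v \in [set p; q] -> [set r; s] = [set u; x] -> [set p; q] = [set v; w].
Proof.
move=> hsq hcl ndv.
wlog hv: p q r s / v = p.
  move=> H gpq gps gqr nqs npr hin E; have := hin; rewrite !inE => /orP[] /eqP hv.
    by apply: (H p q r s).
  rewrite sUC; apply: (H q p s r) => //.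
  - by rewrite g_sym.
  - by rewrite sUC.
  - by rewrite sUC.
subst p => gvq gvs gqr nqs nvr _ E.
have := hsq; rewrite /sq => /and4P[h1 h2 h3 /and5P[h4 h5 h6 h7 h8]].
have := hcl; rewrite /chordless => /andP[nuw nvx].
case: (set2_inv E) => [[? ?]|[? ?]]; subst.
  by rewrite gvs in nvx.
case: (eqVneq q w) => [-> // | nqw].
exfalso; apply: (negP ndv).
apply: (@dvstar_trans _ _ [set u; x]); last exact/dv_star/d2.
apply: dv_star.
have Evu := edgeP h1; have Eux := edgeP h3.
rewrite /dv /inc Evu Eux set21 /= /delta Evu Eux /=.
apply/orP; left; apply/and3P; split.
- apply/eqP => EE; have : v \in [set u; x] by rewrite -EE set21.
  by rewrite !inE (negbTE (gne h1)) (eq_sym v x) (negbTE h6).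
- by apply/set0Pn; exists u; rewrite !inE eqxx orbT.
- rewrite (sUC v u); have guv : g u v by rewrite g_sym.
  have nvx' : v != x by rewrite eq_sym.
  apply/negP => /(ocs_card guv h3 nvx') /eqP C.
  have sub : [set w; q] \subset [set z | sq g u v x z].
    apply/subsetP => z; rewrite !inE => /orP[] /eqP ->.
    + rewrite /sq (g_sym u v) h1 h3 h2 (g_sym w x) h4 /=.
      by rewrite nvx' (eq_sym w u) h5 (eq_sym w v) (gne h2) (eq_sym w x) h8.
    + rewrite /sq (g_sym u v) h1 h3 gvq gqr /=.
      by rewrite nvx' nqs (eq_sym q v) (gne gvq) (gne gqr).
  have := subset_leq_card sub; rewrite C cards2.
  by rewrite eq_sym nqw.
Qed.

Lemma opp_extract v e f : opp_in_Sv g v e f -> exists p q r s,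
  [/\ e = [set p; q], f = [set r; s], g p q, g p s & [/\ g q r, q != s & p != r]].
Proof.
case/existsP=> a /existsP[b /existsP[c /existsP[d /and5P[hsq _ _ _ /andP[_ H]]]]].
move: hsq; rewrite /sq => /and4P[h1 h2 h3 /and5P[h4 h5 h6 h7 h8]].
case/or4P: H => /andP[/eqP -> /eqP ->].
{ exists a; exists b; exists d; exists c.
  do !split => //; try by rewrite g_sym.
  all: by rewrite eq_sym. }
{ exists d; exists c; exists a; exists b.
  do !split => //; try by rewrite g_sym.
  all: by rewrite eq_sym. }
{ exists a; exists c; exists d; exists b.
  do !split => //; try by rewrite g_sym.
  all: by rewrite eq_sym. }
{ exists d; exists b; exists a; exists c.
  do !split => //; try by rewrite g_sym.
  all: by rewrite eq_sym. }
Qed.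

Lemma main v f : in_Fv g v f -> exists e : {set T},
    [/\ inc g v e, opp_in_Sv g v e f,
        (forall e' : {set T}, inc g v e' -> opp_in_Sv g v e' f -> e' = e)
      & dSv g v e f].
Proof.
move=> hF; have := hF; rewrite /in_Fv => /and3P[fe vnf /existsP[u /existsP[w /existsP[x /and4P[hsq hcl hnd hf]]]]].
wlog Ef: u w x hsq hcl hnd hf / f = [set u; x].
  move=> H; case/orP: hf => /eqP Ef; first by apply: (H u w x) => //; rewrite Ef eqxx.
  apply: (H w u x) => //.
  - exact: sq_sym.
  - exact: cl_sym.
  - by apply/negP => /dvstar_sym; apply/negP.
  - by rewrite Ef eqxx.
have := hsq; rewrite /sq => /and4P[h1 h2 h3 /and5P[h4 h5 h6 h7 h8]].
have := hcl; rewrite /chordless => /andP[nuw nvx].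
have gwx : g w x by rewrite g_sym.
have Fw : in_Fv g v [set w; x].
  rewrite /in_Fv (edgeP gwx) !inE (negbTE (gne h2)) (eq_sym v x) (negbTE h6) /=.
  apply/existsP; exists u; apply/existsP; exists w; apply/existsP; exists x.
  by rewrite hsq hcl hnd eqxx orbT.
exists [set v; w]; split.
- by rewrite /inc (edgeP h2) set21.
- apply/existsP; exists v; apply/existsP; exists w; apply/existsP; exists u; apply/existsP; exists x.
  rewrite (sq_sym hsq) /in_Sv /inc (edgeP h2) set21 Fw orbT -(sUC u x) -Ef hF orbT.
  have gvu : g u v by rewrite g_sym.
  by rewrite (edgeP gvu) set22 Ef (sUC u x) !eqxx.
- move=> e' /andP[_ hv] /opp_extract [p [q [r [s [Ee Ef' gpq gps [gqr nqs npr]]]]]].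
  rewrite Ee in hv *; rewrite Ef in Ef'.
  exact: (uniq_core hsq hcl hnd gpq gps gqr nqs npr hv (esym Ef')).
- rewrite /dSv /in_Sv /inc (edgeP h2) set21 hF orbT /=.
  by rewrite Ef; apply/dvstar_sym/dv_star/d2.
Qed.
End S.

Theorem lemma3p4 (T : finType) (g : rel T)
    (g_sym : symmetric g) (g_irr : irreflexive g) (v : T) (f : {set T}) :
  in_Fv g v f ->
  exists e : {set T},
    [/\ inc g v e, opp_in_Sv g v e f,
        (forall e' : {set T}, inc g v e' -> opp_in_Sv g v e' f -> e' = e)
      & dSv g v e f].
Proof. exact: main. Qed.
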